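(* Consider the reduced return maps of the Bowtie network described in the context, with sets $\mathcal{E}_n$ and $\tilde{\mathcal{E}}_n$ as defined there. If $\delta>0$ then $\mathcal{E}_1=\mathcal{E}_2$. If $\tilde\delta>0$ then $\tilde{\mathcal{E}}_1=\tilde{\mathcal{E}}_2$.
   Context: Setting (Bowtie network). A $\mathbb{Z}_2^5$-equivariant vector field on $\mathbb{R}^5$ has equilibria $\xi_j$ on the $x_j$-axes and two heteroclinic cycles $R=[\xi_1\to\xi_2\to\xi_3\to\xi_1]$ and $L=[\xi_2\to\xi_4\to\xi_5\to\xi_2]$, each connection $[\xi_i\to\xi_j]$ lying in the $x_ix_j$-plane. All eigenvalues are real: at $\xi_j$, $-c_{jk}<0$ is the contracting and $e_{jk}>0$ the expanding eigenvalue in the $x_k$-direction; concretely the positive numbers $e_{12},c_{13},c_{14},c_{15}$ (at $\xi_1$), $c_{21},c_{25},e_{23},e_{24}$ (at $\xi_2$), $e_{31},c_{32},c_{34},c_{35}$ (at $\xi_3$), $e_{45},c_{41},c_{42},c_{43}$ (at $\xi_4$), $e_{52},c_{51},c_{53},c_{54}$ (at $\xi_5$). Global maps are the identity and local maps are given by the linearized flow; it is assumed throughout that $e_{23}>e_{24}$. Define $\rho=\frac{c_{42}c_{54}c_{25}}{e_{24}e_{45}e_{52}}$, $\tilde\rho=\frac{c_{32}c_{13}c_{21}}{e_{23}e_{31}e_{12}}$, $\nu=-\frac{e_{23}}{e_{24}}+\frac{c_{25}c_{43}}{e_{24}e_{45}}+\frac{c_{53}c_{42}c_{25}}{e_{45}e_{24}e_{52}}$,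 $\tilde\nu=-\frac{e_{24}}{e_{23}}+\frac{c_{21}c_{34}}{e_{23}e_{31}}+\frac{c_{14}c_{32}c_{21}}{e_{31}e_{23}e_{12}}$, $\mu=\frac{c_{21}}{e_{24}}+\frac{c_{25}c_{41}}{e_{24}e_{45}}+\frac{c_{51}c_{42}c_{25}}{e_{45}e_{24}e_{52}}$, $\tilde\mu=\frac{c_{25}}{e_{23}}+\frac{c_{21}c_{35}}{e_{23}e_{31}}+\frac{c_{15}c_{32}c_{21}}{e_{31}e_{23}e_{12}}$, $\delta=\frac{c_{43}}{e_{45}}+\frac{c_{53}c_{42}}{e_{52}e_{45}}-\frac{e_{23}c_{54}c_{42}}{e_{52}e_{45}e_{24}}$, $\tilde\delta=\frac{c_{34}}{e_{31}}+\frac{c_{14}c_{32}}{e_{12}e_{31}}-\frac{e_{24}c_{13}c_{32}}{e_{12}e_{31}e_{23}}$. Reduced return maps. In the relevant coordinates $(x_3,x_4,x_5)$ of the cross section $H_1^{\mathrm{out},2}$ (identified with $H_2^{\mathrm{in},1}$), points which after passing $\xi_2$ follow the connection to $\xi_3$ form $D_{h_R}=\{(x_3,x_4,x_5): 0<x_3<1,\ x_4>0,\ x_5>0,\ x_4<x_3^{e_{24}/e_{23}}\}$, and the return map around $R$ is $h_R:D_{h_R}\to(0,\infty)^3$, $h_R(x_3,x_4,x_5)=(x_3^{\tilde\rho},x_4x_3^{\tilde\nu},x_5x_3^{\tilde\mu})$. In the relevant coordinates $(x_1,x_3,x_4)$ of $H_5^{\mathrm{out},2}$ (identified with $H_2^{\mathrm{in},5}$),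 points which after passing $\xi_2$ follow the connection to $\xi_4$ form $D_{h_L}=\{(x_1,x_3,x_4): x_1>0,\ x_3>0,\ 0<x_4<1,\ x_4>x_3^{e_{24}/e_{23}}\}$, and the return map around $L$ is $h_L:D_{h_L}\to(0,\infty)^3$, $h_L(x_1,x_3,x_4)=(x_1x_4^{\mu},x_3x_4^{\nu},x_4^{\rho})$. For $n\ge1$, $\tilde{\mathcal{E}}_n$ is the set of points $x$ such that $x,h_R(x),\dots,h_R^{n-1}(x)$ all lie in $D_{h_R}$ (points taking at least $n$ turns around the $R$-cycle), and $\mathcal{E}_n$ is the set of points $y$ such that $y,h_L(y),\dots,h_L^{n-1}(y)$ all lie in $D_{h_L}$ (points taking at least $n$ turns around the $L$-cycle). In particular $\tilde{\mathcal{E}}_1=D_{h_R}$, $\mathcal{E}_1=D_{h_L}$. *)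

(* Defs.v *)
From Stdlib Require Import Reals.
Open Scope R_scope.

(* The 20 eigenvalue magnitudes of the Bowtie network. *)
Record params := Params {
  e12 : R; c13 : R; c14 : R; c15 : R;
  c21 : R; c25 : R; e23 : R; e24 : R;
  e31 : R; c32 : R; c34 : R; c35 : R;
  e45 : R; c41 : R; c42 : R; c43 : R;
  e52 : R; c51 : R; c53 : R; c54 : R }.

Definition valid_params (p : params) : Prop :=
  0 < e12 p /\ 0 < c13 p /\ 0 < c14 p /\ 0 < c15 p /\
  0 < c21 p /\ 0 < c25 p /\ 0 < e23 p /\ 0 < e24 p /\
  0 < e31 p /\ 0 < c32 p /\ 0 < c34 p /\ 0 < c35 p /\
  0 < e45 p /\ 0 < c41 p /\ 0 < c42 p /\ 0 < c43 p /\
  0 < e52 p /\ 0 < c51 p /\ 0 < c53 p /\ 0 < c54 p /\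
  e23 p > e24 p.

Section Quantities.
Variable p : params.

Definition rho : R := c42 p * c54 p * c25 p / (e24 p * e45 p * e52 p).
Definition rho_t : R := c32 p * c13 p * c21 p / (e23 p * e31 p * e12 p).
Definition nu : R := - (e23 p / e24 p) + c25 p * c43 p / (e24 p * e45 p)
  + c53 p * c42 p * c25 p / (e45 p * e24 p * e52 p).
Definition nu_t : R := - (e24 p / e23 p) + c21 p * c34 p / (e23 p * e31 p)
  + c14 p * c32 p * c21 p / (e31 p * e23 p * e12 p).
Definition mu : R := c21 p / e24 p + c25 p * c41 p / (e24 p * e45 p)
  + c51 p * c42 p * c25 p / (e45 p * e24 p * e52 p).
Definition mu_t : R := c25 p / e23 p + c21 p * c35 p / (e23 p * e31 p)
  + c15 p * c32 p * c21 p / (e31 p * e23 p * e12 p).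
Definition delta : R := c43 p / e45 p + c53 p * c42 p / (e52 p * e45 p)
  - e23 p * c54 p * c42 p / (e52 p * e45 p * e24 p).
Definition delta_t : R := c34 p / e31 p + c14 p * c32 p / (e12 p * e31 p)
  - e24 p * c13 p * c32 p / (e12 p * e31 p * e23 p).

Definition point := (R * R * R)%type.

Definition D_hR (x : point) : Prop :=
  let '(x3, x4, x5) := x in
  0 < x3 < 1 /\ 0 < x4 /\ 0 < x5 /\ x4 < Rpower x3 (e24 p / e23 p).

Definition h_R (x : point) : point :=
  let '(x3, x4, x5) := x in
  (Rpower x3 rho_t, x4 * Rpower x3 nu_t, x5 * Rpower x3 mu_t).

Definition D_hL (y : point) : Prop :=
  let '(x1, x3, x4) := y in
  0 < x1 /\ 0 < x3 /\ 0 < x4 < 1 /\ x4 > Rpower x3 (e24 p / e23 p).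

Definition h_L (y : point) : point :=
  let '(x1, x3, x4) := y in
  (x1 * Rpower x4 mu, x3 * Rpower x4 nu, Rpower x4 rho).

(* points taking at least n turns: x, h x, ..., h^(n-1) x all in the domain *)
Definition E_R (n : nat) (x : point) : Prop :=
  forall k : nat, (k < n)%nat -> D_hR (Nat.iter k h_R x).
Definition E_L (n : nat) (y : point) : Prop :=
  forall k : nat, (k < n)%nat -> D_hL (Nat.iter k h_L y).

End Quantities.

(* Main.v *)
Require Import Defs.
From Stdlib Require Import Reals Lra Psatz.
Open Scope R_scope.

Lemma E_L_12 p y : E_L p 2 y <-> D_hL p y /\ D_hL p (h_L p y).
Proof.
  unfold E_L; split.
  - intros H; split; [apply (H 0%nat) | apply (H 1%nat)]; lia.
  - intros [H0 H1] k Hk. destruct k as [|[|k]]; simpl; auto. lia.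
Qed.
Lemma E_L_1 p y : E_L p 1 y <-> D_hL p y.
Proof.
  unfold E_L; split.
  - intros H; apply (H 0%nat); lia.
  - intros H0 k Hk. destruct k; simpl; auto. lia.
Qed.
Lemma E_R_12 p y : E_R p 2 y <-> D_hR p y /\ D_hR p (h_R p y).
Proof.
  unfold E_R; split.
  - intros H; split; [apply (H 0%nat) | apply (H 1%nat)]; lia.
  - intros [H0 H1] k Hk. destruct k as [|[|k]]; simpl; auto. lia.
Qed.
Lemma E_R_1 p y : E_R p 1 y <-> D_hR p y.
Proof.
  unfold E_R; split.
  - intros H; apply (H 0%nat); lia.
  - intros H0 k Hk. destruct k; simpl; auto. lia.
Qed.

Lemma exp_lt1 t : t < 0 -> exp t < 1.
Proof. intros; rewrite <- exp_0; apply exp_increasing; lra. Qed.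

Lemma ln_lt0 x : 0 < x < 1 -> ln x < 0.
Proof. intros; rewrite <- ln_1; apply ln_increasing; lra. Qed.

Theorem lemma4p2 (p : params) (Hp : valid_params p) :
  (delta p > 0 -> forall y : point, E_L p 1 y <-> E_L p 2 y) /\
  (delta_t p > 0 -> forall x : point, E_R p 1 x <-> E_R p 2 x).
Proof.
  unfold valid_params in Hp.
  destruct Hp as (H1&H2&H3&H4&H5&H6&H7&H8&H9&H10&H11&H12&H13&H14&H15&H16&H17&H18&H19&H20&H21).
  split.
  - intros Hd y. rewrite E_L_1, E_L_12. split; [|tauto]. intros HD; split; auto.
    destruct y as [[x1 x3] x4]. unfold D_hL, h_L in *. unfold Rpower in *.
    destruct HD as (Ha&Hb&Hc&He).
    assert (Hrho : 0 < rho p).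
    { unfold rho. apply Rdiv_lt_0_compat; apply Rmult_lt_0_compat; try apply Rmult_lt_0_compat; lra. }
    assert (L : ln x4 < 0) by (apply ln_lt0; lra).
    assert (Hid : 1 + e24 p / e23 p * nu p - rho p = delta p * (c25 p / e23 p))
      by (unfold nu, rho, delta; field; lra).
    assert (Hpos : 0 < delta p * (c25 p / e23 p)).
    { apply Rmult_lt_0_compat; [lra| apply Rdiv_lt_0_compat; lra]. }
    assert (Hl : e24 p / e23 p * ln x3 < ln x4).
    { rewrite <- (ln_exp (e24 p / e23 p * ln x3)). apply ln_increasing; [apply exp_pos|lra]. }
    split; [apply Rmult_lt_0_compat; [lra|apply exp_pos]|].
    split; [apply Rmult_lt_0_compat; [lra|apply exp_pos]|].
    split; [split; [apply exp_pos| apply exp_lt1; nra]|].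
    unfold Rgt. apply exp_increasing.
    rewrite ln_mult by (try lra; apply exp_pos). rewrite ln_exp.
    set (a := e24 p / e23 p) in *. nra.
  - intros Hd x. rewrite E_R_1, E_R_12. split; [|tauto]. intros HD; split; auto.
    destruct x as [[x3 x4] x5]. unfold D_hR, h_R in *. unfold Rpower in *.
    destruct HD as (Ha&Hb&Hc&He).
    assert (Hrho : 0 < rho_t p).
    { unfold rho_t. apply Rdiv_lt_0_compat; apply Rmult_lt_0_compat; try apply Rmult_lt_0_compat; lra. }
    assert (L : ln x3 < 0) by (apply ln_lt0; lra).
    assert (Hid : e24 p / e23 p + nu_t p - rho_t p * (e24 p / e23 p) = delta_t p * (c21 p / e23 p))
      by (unfold nu_t, rho_t, delta_t; field; lra).
    assert (Hpos : 0 < delta_t p * (c21 p / e23 p)).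
    { apply Rmult_lt_0_compat; [lra| apply Rdiv_lt_0_compat; lra]. }
    assert (Hl : ln x4 < e24 p / e23 p * ln x3).
    { rewrite <- (ln_exp (e24 p / e23 p * ln x3)). apply ln_increasing; lra. }
    split; [split; [apply exp_pos| apply exp_lt1; nra]|].
    split; [apply Rmult_lt_0_compat; [lra|apply exp_pos]|].
    split; [apply Rmult_lt_0_compat; [lra|apply exp_pos]|].
    rewrite <- (exp_ln (x4 * exp (nu_t p * ln x3))) by (apply Rmult_lt_0_compat; [lra|apply exp_pos]).
    apply exp_increasing.
    rewrite ln_mult by (try lra; apply exp_pos). rewrite !ln_exp.
    set (a := e24 p / e23 p) in *. nra.
Qed.
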